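(* Let $V_-=\{(u,v)\in\mathbb R_+^2:v\le 2pu/\beta\}$ and suppose $X:[0,T]\to\mathbb R^2$ is $C^1$, satisfies Condition I, and $X(0)\in V_-^o$ (the interior). Let $A_L,A_U$ start from $X(0)$. Then: (1) $X(t)\ge A_L(t)$ componentwise for every $t\le\tau^L_{V_-^c}\wedge\tau_{V_-^c}$, and $X(t)\le A_U(t)$ componentwise for every $t\le\tau^U_{V_-^c}\wedge\tau_{V_-^c}$; (2) if $\tau^\square_B$ denotes the hitting time of $B$ by the curve $(A_L^1(t),A_U^2(t))$, then $A_L(t)\le X(t)\le A_U(t)$ componentwise for every $t\le\tau^\square_{V_-^c}$. In particular, if $\tau^\square_{V_-^c}=\infty$ then $A_L(t)\le X(t)\le A_U(t)$ for all $t\in[0,T]$.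
   Context: Fix an integer $p\ge3$, $\beta>0$, $\Lambda_p>0$. $\mathcal F_1(u,v)=-pu+\beta v$, $\mathcal F_2^L(u,v)=2p(p-1)-2(p-1)v+2pu(pu-\beta v)-2\beta\Lambda_pv$, $\mathcal F_2^U$ the same with $+2\beta\Lambda_pv$. $A_L$ (resp. $A_U$) solves $\dot A=(\mathcal F_1,\mathcal F_2^L)(A)$ (resp. $(\mathcal F_1,\mathcal F_2^U)(A)$). Hitting times: $\tau_B=\inf\{t\ge0:X(t)\in B\}$, $\tau^L_B$, $\tau^U_B$ the analogues for $A_L,A_U$. Condition I: $\dot X_1=\mathcal F_1(X)$ and $\mathcal F_2^L(X)\le\dot X_2\le\mathcal F_2^U(X)$ on $[0,T]$. *)

(* Defs.v *)
From Stdlib Require Import Reals Lra Lia.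
Open Scope R_scope.

Definition F1 (p : nat) (beta u v : R) : R := - INR p * u + beta * v.

Definition F2L (p : nat) (beta Lam u v : R) : R :=
  2 * INR p * (INR p - 1) - 2 * (INR p - 1) * v
  + 2 * INR p * u * (INR p * u - beta * v) - 2 * beta * Lam * v.

Definition F2U (p : nat) (beta Lam u v : R) : R :=
  2 * INR p * (INR p - 1) - 2 * (INR p - 1) * v
  + 2 * INR p * u * (INR p * u - beta * v) + 2 * beta * Lam * v.

Definition Vminus (p : nat) (beta u v : R) : Prop :=
  0 <= u /\ 0 <= v /\ v <= 2 * INR p * u / beta.

Definition Vminus_int (p : nat) (beta u v : R) : Prop :=
  0 < u /\ 0 < v /\ v < 2 * INR p * u / beta.

Definition Vminus_c (p : nat) (beta u v : R) : Prop := ~ Vminus p beta u v.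

(* [le_hit Y1 Y2 D B t] means  t <= tau_B  where
   tau_B = inf { s in [0,D] : (Y1 s, Y2 s) \in B }  (inf of the empty set = +oo),
   the hitting time of B by the curve s |-> (Y1 s, Y2 s) defined on [0,D].
   (t <= inf S  iff  every element of S is >= t.) *)
Definition le_hit (Y1 Y2 : R -> R) (D : R) (B : R -> R -> Prop) (t : R) : Prop :=
  forall s, 0 <= s <= D -> B (Y1 s) (Y2 s) -> t <= s.

(* Main.v *)
Require Import Defs.
From Stdlib Require Import Reals Lra Classical.
Open Scope R_scope.

Lemma dcont f x l : derivable_pt_lim f x l -> continuity_pt f x.
Proof. intro H. apply derivable_continuous_pt. exact (exist _ l H). Qed.

Lemma closed_ge0 g t : 0 < t -> continuity_pt g t ->
  (forall s, 0 <= s < t -> 0 <= g s) -> 0 <= g t.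
Proof.
  intros Ht Hc Hs. destruct (Rle_lt_dec 0 (g t)) as [|Hn]; auto. exfalso.
  unfold continuity_pt, continue_in, limit1_in, limit_in in Hc.
  destruct (Hc (- g t)) as [a [Ha Hc']]; [lra|].
  set (s := Rmax (t - a/2) (t/2)).
  assert (Hs1 : t/2 <= s) by apply Rmax_r.
  assert (Hs2 : t - a/2 <= s) by apply Rmax_l.
  assert (Hs3 : s < t) by (unfold s; apply Rmax_lub_lt; lra).
  specialize (Hc' s). simpl in Hc'. unfold R_dist in Hc'.
  assert (Hd : Rabs (s - t) < a) by (rewrite Rabs_left; lra).
  specialize (Hc' (conj (conj I (fun E => Rlt_not_eq _ _ Hs3 (eq_sym E))) Hd)).
  specialize (Hs s ltac:(lra)).
  apply Rabs_def2 in Hc'. lra.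
Qed.

Lemma left_min_deriv f x l : 0 < x -> derivable_pt_lim f x l ->
  (forall s, 0 <= s <= x -> f x <= f s) -> l <= 0.
Proof.
  intros Hx Hd Hm. destruct (Rle_lt_dec l 0) as [|Hl]; auto. exfalso.
  destruct (Hd l Hl) as [de Hde].
  set (h := - Rmin (de/2) x).
  assert (Hde0 := cond_pos de).
  assert (Hm1 : Rmin (de/2) x <= de/2) by apply Rmin_l.
  assert (Hm2 : Rmin (de/2) x <= x) by apply Rmin_r.
  assert (Hm3 : 0 < Rmin (de/2) x) by (apply Rmin_glb_lt; lra).
  assert (Hh : h < 0) by (unfold h; lra).
  specialize (Hde h (Rlt_not_eq _ _ Hh) ltac:(rewrite Rabs_left; unfold h; lra)).
  specialize (Hm (x + h) ltac:(unfold h; lra)).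
  set (q := (f (x + h) - f x) / h) in *.
  assert (Hq : q * h = f (x + h) - f x) by (unfold q; field; lra).
  apply Rabs_def2 in Hde. nra.
Qed.

Lemma dexp L x : derivable_pt_lim (fun s => exp (- L * s)) x (exp (- L * x) * (- L)).
Proof.
  assert (H1 : derivable_pt_lim (fun s => - L * s) x (- L)).
  { pose proof (derivable_pt_lim_scal id (- L) x 1 (derivable_pt_lim_id x)) as H.
    rewrite Rmult_1_r in H. exact H. }
  exact (derivable_pt_lim_comp (fun s => - L * s) exp x (- L) (exp (- L * x)) H1
          (derivable_pt_lim_exp _)).
Qed.

Lemma dweight L y x d : derivable_pt_lim y x d ->
  derivable_pt_lim (fun s => exp (- L * s) * y s) x
     (exp (- L * x) * (- L) * y x + exp (- L * x) * d).
Proof.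
  intro H. exact (derivable_pt_lim_mult _ _ x _ _ (dexp L x) H).
Qed.

Lemma step L K y dy r s : K < L -> 0 < r <= s -> derivable_pt_lim y r dy ->
  (forall c, 0 <= c <= s -> exp (- L * r) * y r <= exp (- L * c) * y c) ->
  y r < 0 -> K * y r <= dy -> False.
Proof.
  intros HKL Hr Hd Hm Hy HK.
  assert (H := left_min_deriv _ r _ (proj1 Hr) (dweight L y r dy Hd)
     (fun c Hc => Hm c ltac:(lra))).
  assert (He := exp_pos (- L * r)).
  assert (H2 : dy - L * y r <= 0).
  { destruct (Rle_lt_dec (dy - L * y r) 0); auto. nra. }
  nra.
Qed.

Lemma min4 a b c d :
  (a <= b /\ a <= c /\ a <= d) \/ (b <= a /\ b <= c /\ b <= d) \/
  (c <= a /\ c <= b /\ c <= d) \/ (d <= a /\ d <= b /\ d <= c).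
Proof.
  destruct (Rle_lt_dec a b); destruct (Rle_lt_dec a c); destruct (Rle_lt_dec a d);
  destruct (Rle_lt_dec b c); destruct (Rle_lt_dec b d); destruct (Rle_lt_dec c d);
  first [ left; lra | right; left; lra | right; right; left; lra | right; right; right; lra ].
Qed.

Lemma get_min L y s t d : 0 <= s <= t ->
  (forall r, 0 <= r <= t -> derivable_pt_lim y r (d r)) ->
  exists r, 0 <= r <= s /\
    forall c, 0 <= c <= s -> exp (- L * r) * y r <= exp (- L * c) * y c.
Proof.
  intros Hs Hd.
  destruct (continuity_ab_min (fun c => exp (- L * c) * y c) 0 s (proj1 Hs)) as [r [H1 H2]].
  { intros c Hc. exact (dcont _ _ _ (dweight L y c (d c) (Hd c ltac:(lra)))). }
  exists r. split; auto.
Qed.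

Ltac fin L K s Hneg y r R M C D Z HKL :=
    let E := fresh in
    assert (E := exp_pos (- L * r));
    assert (Hyr : y r < 0) by (destruct Hneg as [?|[?|[?|?]]]; nra);
    assert (Hr0 : 0 < r) by (destruct (Rle_lt_dec r 0); auto;
                               assert (r = 0) by lra; subst r; rewrite Z in Hyr; lra);
    apply (step L K y (_ r) r s HKL ltac:(lra) (D r ltac:(lra)) M Hyr);
    apply C; [lra | exact Hyr | ..].

Lemma core4 (t K : R) (y1 y2 y3 y4 d1 d2 d3 d4 : R -> R) :
  0 <= K ->
  (forall s, 0 <= s <= t -> derivable_pt_lim y1 s (d1 s)) ->
  (forall s, 0 <= s <= t -> derivable_pt_lim y2 s (d2 s)) ->
  (forall s, 0 <= s <= t -> derivable_pt_lim y3 s (d3 s)) ->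
  (forall s, 0 <= s <= t -> derivable_pt_lim y4 s (d4 s)) ->
  y1 0 = 0 -> y2 0 = 0 -> y3 0 = 0 -> y4 0 = 0 ->
  (forall s, 0 <= s <= t -> y1 s < 0 -> y1 s <= y2 s -> y1 s <= y3 s -> y1 s <= y4 s -> K * y1 s <= d1 s) ->
  (forall s, 0 <= s <= t -> y2 s < 0 -> y2 s <= y1 s -> y2 s <= y3 s -> y2 s <= y4 s -> K * y2 s <= d2 s) ->
  (forall s, 0 <= s <= t -> y3 s < 0 -> y3 s <= y1 s -> y3 s <= y2 s -> y3 s <= y4 s -> K * y3 s <= d3 s) ->
  (forall s, 0 <= s <= t -> y4 s < 0 -> y4 s <= y1 s -> y4 s <= y2 s -> y4 s <= y3 s -> K * y4 s <= d4 s) ->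
  forall s, 0 <= s <= t -> 0 <= y1 s /\ 0 <= y2 s /\ 0 <= y3 s /\ 0 <= y4 s.
Proof.
  intros HK D1 D2 D3 D4 Z1 Z2 Z3 Z4 C1 C2 C3 C4 s Hs.
  set (L := K + 1).
  destruct (get_min L y1 s t d1 Hs D1) as [r1 [R1 M1]].
  destruct (get_min L y2 s t d2 Hs D2) as [r2 [R2 M2]].
  destruct (get_min L y3 s t d3 Hs D3) as [r3 [R3 M3]].
  destruct (get_min L y4 s t d4 Hs D4) as [r4 [R4 M4]].
  assert (Hneg : ~ (0 <= y1 s /\ 0 <= y2 s /\ 0 <= y3 s /\ 0 <= y4 s) ->
     exp (- L * r1) * y1 r1 < 0 \/ exp (- L * r2) * y2 r2 < 0 \/
     exp (- L * r3) * y3 r3 < 0 \/ exp (- L * r4) * y4 r4 < 0).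
  { intro Hn. assert (He := exp_pos (- L * s)).
    specialize (M1 s ltac:(lra)). specialize (M2 s ltac:(lra)).
    specialize (M3 s ltac:(lra)). specialize (M4 s ltac:(lra)).
    destruct (Rlt_le_dec (y1 s) 0). left; nra.
    destruct (Rlt_le_dec (y2 s) 0). right; left; nra.
    destruct (Rlt_le_dec (y3 s) 0). right; right; left; nra.
    destruct (Rlt_le_dec (y4 s) 0). right; right; right; nra.
    exfalso; tauto. }
  apply NNPP; intro Hn. specialize (Hneg Hn).
  assert (HKL : K < L) by (unfold L; lra).
  destruct (min4 (exp (- L * r1) * y1 r1) (exp (- L * r2) * y2 r2)
                 (exp (- L * r3) * y3 r3) (exp (- L * r4) * y4 r4))
    as [[A1 [A2 A3]]|[[A1 [A2 A3]]|[[A1 [A2 A3]]|[A1 [A2 A3]]]]].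
  - fin L K s Hneg y1 r1 R1 M1 C1 D1 Z1 HKL.
    + specialize (M2 r1 R1). nra.
    + specialize (M3 r1 R1). nra.
    + specialize (M4 r1 R1). nra.
  - fin L K s Hneg y2 r2 R2 M2 C2 D2 Z2 HKL.
    + specialize (M1 r2 R2). nra.
    + specialize (M3 r2 R2). nra.
    + specialize (M4 r2 R2). nra.
  - fin L K s Hneg y3 r3 R3 M3 C3 D3 Z3 HKL.
    + specialize (M1 r3 R3). nra.
    + specialize (M2 r3 R3). nra.
    + specialize (M4 r3 R3). nra.
  - fin L K s Hneg y4 r4 R4 M4 C4 D4 Z4 HKL.
    + specialize (M1 r4 R4). nra.
    + specialize (M2 r4 R4). nra.
    + specialize (M3 r4 R4). nra.
Qed.

Lemma bnd f t : 0 <= t -> (forall c, 0 <= c <= t -> continuity_pt f c) ->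
  exists M, 0 <= M /\ forall c, 0 <= c <= t -> - M <= f c <= M.
Proof.
  intros Ht Hc.
  destruct (continuity_ab_maj f 0 t Ht Hc) as [a [Ha _]].
  destruct (continuity_ab_min f 0 t Ht Hc) as [b [Hb _]].
  exists (Rabs (f a) + Rabs (f b)). split.
  - assert (H1 := Rabs_pos (f a)); assert (H2 := Rabs_pos (f b)); lra.
  - intros c Hc'. specialize (Ha c Hc'). specialize (Hb c Hc').
    assert (H1 := Rle_abs (f a)); assert (H2 := Rle_abs (- f b)); rewrite Rabs_Ropp in H2.
    assert (H3 := Rabs_pos (f a)); assert (H4 := Rabs_pos (f b)). lra.
Qed.

Lemma prod_lb a b m N : m < 0 -> m <= a -> m <= b -> -N <= a <= N -> -N <= b <= N ->
  N * m <= a * b.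
Proof.
  intros. destruct (Rle_lt_dec 0 a); destruct (Rle_lt_dec 0 b); nra.
Qed.

Lemma region p beta Y1 Y2 D t : 0 < beta -> 0 <= t <= D ->
 (0 < t -> continuity_pt Y1 t /\ continuity_pt Y2 t) ->
 0 <= 2*INR p*Y1 0 - beta*Y2 0 ->
 le_hit Y1 Y2 D (Vminus_c p beta) t ->
 forall s, 0 <= s <= t -> 0 <= 2*INR p*Y1 s - beta*Y2 s.
Proof.
  intros Hb Ht Hc H0 Hh.
  assert (Hlt : forall s, 0 <= s < t -> 0 <= 2*INR p*Y1 s - beta*Y2 s).
  { intros s Hs. assert (HV : Vminus p beta (Y1 s) (Y2 s)).
    { apply NNPP. intro Hn. specialize (Hh s ltac:(lra) Hn). lra. }
    destruct HV as [_ [_ HV]].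
    apply Rmult_le_compat_l with (r := beta) in HV; [|lra].
    replace (beta * (2 * INR p * Y1 s / beta)) with (2 * INR p * Y1 s) in HV by (field; lra).
    lra. }
  intros s Hs. destruct (Rle_lt_dec t s).
  - assert (s = t) by lra. subst s.
    destruct (Rle_lt_dec t 0).
    + assert (t = 0) by lra. subst t. exact H0.
    + destruct (Hc r0) as [C1 C2].
      apply (closed_ge0 (fun s => 2*INR p*Y1 s - beta*Y2 s) t r0); [|exact Hlt].
      apply continuity_pt_minus.
      * exact (continuity_pt_scal Y1 (2 * INR p) t C1).
      * exact (continuity_pt_scal Y2 beta t C2).
  - apply Hlt; lra.
Qed.

Lemma lower p beta Lam t (X1 X2 dX1 dX2 AL1 AL2 : R -> R) :
  (3 <= p)%nat -> 0 < beta -> 0 < Lam -> 0 <= t ->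
  (forall s, 0 <= s <= t -> derivable_pt_lim X1 s (dX1 s)) ->
  (forall s, 0 <= s <= t -> derivable_pt_lim X2 s (dX2 s)) ->
  (forall s, 0 <= s <= t -> derivable_pt_lim AL1 s (F1 p beta (AL1 s) (AL2 s))) ->
  (forall s, 0 <= s <= t -> derivable_pt_lim AL2 s (F2L p beta Lam (AL1 s) (AL2 s))) ->
  (forall s, 0 <= s <= t -> dX1 s = F1 p beta (X1 s) (X2 s)) ->
  (forall s, 0 <= s <= t -> F2L p beta Lam (X1 s) (X2 s) <= dX2 s) ->
  AL1 0 = X1 0 -> AL2 0 = X2 0 ->
  (forall s, 0 <= s <= t -> 0 <= 2*INR p*AL1 s - beta*AL2 s) ->
  forall s, 0 <= s <= t -> AL1 s <= X1 s /\ AL2 s <= X2 s.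
Proof.
  intros Hp Hb HL Ht DX1 DX2 DA1 DA2 HI1 HIL E1 E2 Hk.
  assert (HP : 3 <= INR p) by (replace 3 with (INR 3) by (simpl; lra); apply le_INR; auto).
  set (P := INR p) in *.
  destruct (bnd X1 t Ht (fun c Hc => dcont _ _ _ (DX1 c Hc))) as [M1 [HM1 B1]].
  destruct (bnd AL1 t Ht (fun c Hc => dcont _ _ _ (DA1 c Hc))) as [M2 [HM2 B2]].
  destruct (bnd AL2 t Ht (fun c Hc => dcont _ _ _ (DA2 c Hc))) as [M3 [HM3 B3]].
  set (M := M1 + M2 + M3).
  set (K := beta + (4*P*beta + 4*P*P)*M).
  assert (HM : 0 <= M) by (unfold M; lra).
  assert (HKb : 0 <= (4*P*beta + 4*P*P)*M) by (apply Rmult_le_pos; nra).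
  assert (HK : 0 <= K) by (unfold K; lra).
  intros s Hs.
  enough (Hall : 0 <= X1 s - AL1 s /\ 0 <= X2 s - AL2 s /\ 0 <= 0 /\ 0 <= 0) by lra.
  apply (core4 t K (fun s => X1 s - AL1 s) (fun s => X2 s - AL2 s) (fun _ => 0) (fun _ => 0)
    (fun s => dX1 s - F1 p beta (AL1 s) (AL2 s)) (fun s => dX2 s - F2L p beta Lam (AL1 s) (AL2 s))
    (fun _ => 0) (fun _ => 0) HK).
  - intros r Hr. exact (derivable_pt_lim_minus _ _ _ _ _ (DX1 r Hr) (DA1 r Hr)).
  - intros r Hr. exact (derivable_pt_lim_minus _ _ _ _ _ (DX2 r Hr) (DA2 r Hr)).
  - intros r Hr. apply derivable_pt_lim_const.
  - intros r Hr. apply derivable_pt_lim_const.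
  - simpl; lra.
  - simpl; lra.
  - reflexivity.
  - reflexivity.
  - intros r Hr Hy Hy2 _ _. rewrite (HI1 r Hr). unfold F1. fold P.
    assert (Hkb : beta <= K) by (unfold K; lra).
    assert ((K - beta) * (X1 r - AL1 r) <= 0) by nra.
    nra.
  - intros r Hr Hy Hy1 _ _.
    specialize (HIL r Hr). specialize (Hk r Hr).
    specialize (B1 r Hr). specialize (B2 r Hr). specialize (B3 r Hr).
    set (c := -2*(P-1) - 2*P*beta*X1 r - 2*beta*Lam).
    set (k := 2*P*(2*P*AL1 r - beta*AL2 r)).
    assert (Hid : F2L p beta Lam (X1 r) (X2 r) - F2L p beta Lam (AL1 r) (AL2 r)
       = c * (X2 r - AL2 r) + k * (X1 r - AL1 r) + 2*P*P*(X1 r - AL1 r)^2).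
    { unfold F2L, c, k. fold P. ring. }
    assert (Hck : c + k <= K).
    { unfold c, k, K, M.
      assert (0 <= P*beta*(M1 + X1 r)) by (apply Rmult_le_pos; nra).
      assert (0 <= P*P*(M2 - AL1 r)) by (apply Rmult_le_pos; nra).
      assert (0 <= P*beta*(M3 + AL2 r)) by (apply Rmult_le_pos; nra).
      assert (0 <= P*beta*(M2+M3)) by (apply Rmult_le_pos; nra).
      assert (0 <= P*P*(M1+M3)) by (apply Rmult_le_pos; nra).
      assert (0 <= P*beta*Lam) by (apply Rmult_le_pos; nra).
      nra. }
    assert (0 <= k) by (unfold k; apply Rmult_le_pos; lra).
    assert (k * (X2 r - AL2 r) <= k * (X1 r - AL1 r)) by (apply Rmult_le_compat_l; lra).
    assert (0 <= (K - (c + k)) * (AL2 r - X2 r)) by (apply Rmult_le_pos; lra).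
    assert (0 <= 2*P*P*(X1 r - AL1 r)^2) by (apply Rmult_le_pos; [nra | apply pow2_ge_0]).
    lra.
  - intros r Hr Hy. lra.
  - intros r Hr Hy. lra.
  - exact Hs.
Qed.

Lemma upper p beta Lam t (X1 X2 dX1 dX2 AU1 AU2 : R -> R) :
  (3 <= p)%nat -> 0 < beta -> 0 < Lam -> 0 <= t ->
  (forall s, 0 <= s <= t -> derivable_pt_lim X1 s (dX1 s)) ->
  (forall s, 0 <= s <= t -> derivable_pt_lim X2 s (dX2 s)) ->
  (forall s, 0 <= s <= t -> derivable_pt_lim AU1 s (F1 p beta (AU1 s) (AU2 s))) ->
  (forall s, 0 <= s <= t -> derivable_pt_lim AU2 s (F2U p beta Lam (AU1 s) (AU2 s))) ->
  (forall s, 0 <= s <= t -> dX1 s = F1 p beta (X1 s) (X2 s)) ->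
  (forall s, 0 <= s <= t -> dX2 s <= F2U p beta Lam (X1 s) (X2 s)) ->
  AU1 0 = X1 0 -> AU2 0 = X2 0 ->
  (forall s, 0 <= s <= t -> 0 <= 2*INR p*X1 s - beta*X2 s) ->
  forall s, 0 <= s <= t -> X1 s <= AU1 s /\ X2 s <= AU2 s.
Proof.
  intros Hp Hb HL Ht DX1 DX2 DA1 DA2 HI1 HIU E1 E2 Hk.
  assert (HP : 3 <= INR p) by (replace 3 with (INR 3) by (simpl; lra); apply le_INR; auto).
  set (P := INR p) in *.
  destruct (bnd X1 t Ht (fun c Hc => dcont _ _ _ (DX1 c Hc))) as [M1 [HM1 B1]].
  destruct (bnd AU1 t Ht (fun c Hc => dcont _ _ _ (DA1 c Hc))) as [M2 [HM2 B2]].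
  destruct (bnd X2 t Ht (fun c Hc => dcont _ _ _ (DX2 c Hc))) as [M3 [HM3 B3]].
  set (M := M1 + M2 + M3).
  set (K := beta + 2*beta*Lam + (4*P*beta + 4*P*P)*M).
  assert (HM : 0 <= M) by (unfold M; lra).
  assert (HKb : 0 <= (4*P*beta + 4*P*P)*M) by (apply Rmult_le_pos; nra).
  assert (HbL : 0 <= beta*Lam) by nra.
  assert (HK : 0 <= K) by (unfold K; lra).
  intros s Hs.
  enough (Hall : 0 <= AU1 s - X1 s /\ 0 <= AU2 s - X2 s /\ 0 <= 0 /\ 0 <= 0) by lra.
  apply (core4 t K (fun s => AU1 s - X1 s) (fun s => AU2 s - X2 s) (fun _ => 0) (fun _ => 0)
    (fun s => F1 p beta (AU1 s) (AU2 s) - dX1 s) (fun s => F2U p beta Lam (AU1 s) (AU2 s) - dX2 s)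
    (fun _ => 0) (fun _ => 0) HK).
  - intros r Hr. exact (derivable_pt_lim_minus _ _ _ _ _ (DA1 r Hr) (DX1 r Hr)).
  - intros r Hr. exact (derivable_pt_lim_minus _ _ _ _ _ (DA2 r Hr) (DX2 r Hr)).
  - intros r Hr. apply derivable_pt_lim_const.
  - intros r Hr. apply derivable_pt_lim_const.
  - simpl; lra.
  - simpl; lra.
  - reflexivity.
  - reflexivity.
  - intros r Hr Hy Hy2 _ _. rewrite (HI1 r Hr). unfold F1. fold P.
    assert (Hkb : beta <= K) by (unfold K; lra).
    assert (0 <= (K - beta) * (X1 r - AU1 r)) by (apply Rmult_le_pos; lra).
    assert (0 <= P * (X1 r - AU1 r)) by (apply Rmult_le_pos; lra).
    assert (beta * (AU1 r - X1 r) <= beta * (AU2 r - X2 r)) by (apply Rmult_le_compat_l; lra).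
    lra.
  - intros r Hr Hy Hy1 _ _.
    specialize (HIU r Hr). specialize (Hk r Hr).
    specialize (B1 r Hr). specialize (B2 r Hr). specialize (B3 r Hr).
    set (c := -2*(P-1) - 2*P*beta*AU1 r + 2*beta*Lam).
    set (k := 2*P*(2*P*X1 r - beta*X2 r)).
    assert (Hid : F2U p beta Lam (AU1 r) (AU2 r) - F2U p beta Lam (X1 r) (X2 r)
       = c * (AU2 r - X2 r) + k * (AU1 r - X1 r) + 2*P*P*(AU1 r - X1 r)^2).
    { unfold F2U, c, k. fold P. ring. }
    assert (Hck : c + k <= K).
    { unfold c, k, K, M.
      assert (0 <= P*beta*(M2 + AU1 r)) by (apply Rmult_le_pos; nra).
      assert (0 <= P*P*(M1 - X1 r)) by (apply Rmult_le_pos; nra).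
      assert (0 <= P*beta*(M3 + X2 r)) by (apply Rmult_le_pos; nra).
      assert (0 <= P*beta*(M1+M3)) by (apply Rmult_le_pos; nra).
      assert (0 <= P*beta*(M1+M2)) by (apply Rmult_le_pos; nra).
      assert (0 <= P*P*(M2+M3)) by (apply Rmult_le_pos; nra).
      nra. }
    assert (0 <= k) by (unfold k; apply Rmult_le_pos; lra).
    assert (k * (AU2 r - X2 r) <= k * (AU1 r - X1 r)) by (apply Rmult_le_compat_l; lra).
    assert (0 <= (K - (c + k)) * (X2 r - AU2 r)) by (apply Rmult_le_pos; lra).
    assert (0 <= 2*P*P*(AU1 r - X1 r)^2) by (apply Rmult_le_pos; [nra | apply pow2_ge_0]).
    lra.
  - intros r Hr Hy. lra.
  - intros r Hr Hy. lra.
  - exact Hs.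
Qed.

Lemma coupled p beta Lam t (X1 X2 dX1 dX2 AL1 AL2 AU1 AU2 : R -> R) :
  (3 <= p)%nat -> 0 < beta -> 0 < Lam -> 0 <= t ->
  (forall s, 0 <= s <= t -> derivable_pt_lim X1 s (dX1 s)) ->
  (forall s, 0 <= s <= t -> derivable_pt_lim X2 s (dX2 s)) ->
  (forall s, 0 <= s <= t -> derivable_pt_lim AL1 s (F1 p beta (AL1 s) (AL2 s))) ->
  (forall s, 0 <= s <= t -> derivable_pt_lim AL2 s (F2L p beta Lam (AL1 s) (AL2 s))) ->
  (forall s, 0 <= s <= t -> derivable_pt_lim AU1 s (F1 p beta (AU1 s) (AU2 s))) ->
  (forall s, 0 <= s <= t -> derivable_pt_lim AU2 s (F2U p beta Lam (AU1 s) (AU2 s))) ->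
  (forall s, 0 <= s <= t -> dX1 s = F1 p beta (X1 s) (X2 s)) ->
  (forall s, 0 <= s <= t -> F2L p beta Lam (X1 s) (X2 s) <= dX2 s) ->
  (forall s, 0 <= s <= t -> dX2 s <= F2U p beta Lam (X1 s) (X2 s)) ->
  AL1 0 = X1 0 -> AL2 0 = X2 0 -> AU1 0 = X1 0 -> AU2 0 = X2 0 ->
  (forall s, 0 <= s <= t -> 0 <= 2*INR p*AL1 s - beta*AU2 s) ->
  forall s, 0 <= s <= t ->
    (AL1 s <= X1 s /\ AL2 s <= X2 s) /\ (X1 s <= AU1 s /\ X2 s <= AU2 s).
Proof.
  intros Hp Hb HL Ht DX1 DX2 DA1 DA2 DB1 DB2 HI1 HIL HIU E1 E2 E3 E4 Hk.
  assert (HP : 3 <= INR p) by (replace 3 with (INR 3) by (simpl; lra); apply le_INR; auto).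
  set (P := INR p) in *.
  destruct (bnd X1 t Ht (fun c Hc => dcont _ _ _ (DX1 c Hc))) as [M1 [HM1 B1]].
  destruct (bnd X2 t Ht (fun c Hc => dcont _ _ _ (DX2 c Hc))) as [M2 [HM2 B2]].
  destruct (bnd AL1 t Ht (fun c Hc => dcont _ _ _ (DA1 c Hc))) as [M3 [HM3 B3]].
  destruct (bnd AL2 t Ht (fun c Hc => dcont _ _ _ (DA2 c Hc))) as [M4 [HM4 B4]].
  destruct (bnd AU1 t Ht (fun c Hc => dcont _ _ _ (DB1 c Hc))) as [M5 [HM5 B5]].
  destruct (bnd AU2 t Ht (fun c Hc => dcont _ _ _ (DB2 c Hc))) as [M6 [HM6 B6]].
  set (M := M1 + M2 + M3 + M4 + M5 + M6).
  set (N := 2 * M).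
  set (K := beta + 2*beta*Lam + (10*P*beta + 20*P*P)*M).
  assert (HM : 0 <= M) by (unfold M; lra).
  assert (HPb : 0 <= P*beta) by nra.
  assert (HPP : 0 <= P*P) by nra.
  assert (HPbM : 0 <= P*beta*M) by (apply Rmult_le_pos; lra).
  assert (HPPM : 0 <= P*P*M) by (apply Rmult_le_pos; lra).
  assert (HbL : 0 <= beta*Lam) by nra.
  assert (HK : 0 <= K) by (unfold K; nra).
  assert (Hkb : beta <= K) by (unfold K; nra).
  intros s Hs.
  enough (Hall : 0 <= X1 s - AL1 s /\ 0 <= X2 s - AL2 s /\ 0 <= AU1 s - X1 s /\ 0 <= AU2 s - X2 s) by lra.
  apply (core4 t K (fun s => X1 s - AL1 s) (fun s => X2 s - AL2 s)
    (fun s => AU1 s - X1 s) (fun s => AU2 s - X2 s)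
    (fun s => dX1 s - F1 p beta (AL1 s) (AL2 s)) (fun s => dX2 s - F2L p beta Lam (AL1 s) (AL2 s))
    (fun s => F1 p beta (AU1 s) (AU2 s) - dX1 s) (fun s => F2U p beta Lam (AU1 s) (AU2 s) - dX2 s)
    HK).
  - intros r Hr. exact (derivable_pt_lim_minus _ _ _ _ _ (DX1 r Hr) (DA1 r Hr)).
  - intros r Hr. exact (derivable_pt_lim_minus _ _ _ _ _ (DX2 r Hr) (DA2 r Hr)).
  - intros r Hr. exact (derivable_pt_lim_minus _ _ _ _ _ (DB1 r Hr) (DX1 r Hr)).
  - intros r Hr. exact (derivable_pt_lim_minus _ _ _ _ _ (DB2 r Hr) (DX2 r Hr)).
  - simpl; lra.
  - simpl; lra.
  - simpl; lra.
  - simpl; lra.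
  - intros r Hr Hy Hy2 _ _. rewrite (HI1 r Hr). unfold F1. fold P.
    assert (0 <= (K - beta) * (AL1 r - X1 r)) by (apply Rmult_le_pos; lra).
    assert (0 <= P * (AL1 r - X1 r)) by (apply Rmult_le_pos; lra).
    assert (beta * (X1 r - AL1 r) <= beta * (X2 r - AL2 r)) by (apply Rmult_le_compat_l; lra).
    lra.
  - intros r Hr Hy Hy1 Hy3 Hy4.
    specialize (HIL r Hr). specialize (Hk r Hr).
    specialize (B1 r Hr). specialize (B2 r Hr). specialize (B3 r Hr).
    specialize (B4 r Hr). specialize (B5 r Hr). specialize (B6 r Hr).
    set (c := -2*(P-1) - 2*P*beta*AL1 r - 2*beta*Lam).
    set (k := 2*P*(2*P*AL1 r - beta*AU2 r)).
    assert (Hid : F2L p beta Lam (X1 r) (X2 r) - F2L p beta Lam (AL1 r) (AL2 r)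
       = c * (X2 r - AL2 r) + k * (X1 r - AL1 r) + 2*P*P*(X1 r - AL1 r)^2
         + 2*P*beta*((X1 r - AL1 r)*(AU2 r - X2 r))).
    { unfold F2L, c, k. fold P. ring. }
    assert (Hck : c + k + 2*P*beta*N <= K).
    { unfold c, k, K, N.
      assert (0 <= P*beta*(M + AL1 r)) by (apply Rmult_le_pos; unfold M in *; lra).
      assert (0 <= P*P*(M - AL1 r)) by (apply Rmult_le_pos; unfold M in *; lra).
      assert (0 <= P*beta*(M + AU2 r)) by (apply Rmult_le_pos; unfold M in *; lra).
      nra. }
    assert (0 <= k) by (unfold k; apply Rmult_le_pos; lra).
    assert (k * (X2 r - AL2 r) <= k * (X1 r - AL1 r)) by (apply Rmult_le_compat_l; lra).
    assert (Hpr : N * (X2 r - AL2 r) <= (X1 r - AL1 r)*(AU2 r - X2 r))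
      by (apply prod_lb; unfold N, M in *; lra).
    assert (2*P*beta*(N * (X2 r - AL2 r)) <= 2*P*beta*((X1 r - AL1 r)*(AU2 r - X2 r)))
      by (apply Rmult_le_compat_l; lra).
    assert (0 <= (K - (c + k + 2*P*beta*N)) * (AL2 r - X2 r)) by (apply Rmult_le_pos; lra).
    assert (0 <= 2*P*P*(X1 r - AL1 r)^2) by (apply Rmult_le_pos; [nra | apply pow2_ge_0]).
    lra.
  - intros r Hr Hy _ _ Hy1. rewrite (HI1 r Hr). unfold F1. fold P.
    assert (0 <= (K - beta) * (X1 r - AU1 r)) by (apply Rmult_le_pos; lra).
    assert (0 <= P * (X1 r - AU1 r)) by (apply Rmult_le_pos; lra).
    assert (beta * (AU1 r - X1 r) <= beta * (AU2 r - X2 r)) by (apply Rmult_le_compat_l; lra).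
    lra.
  - intros r Hr Hy Hy1 Hy2 Hy3.
    specialize (HIU r Hr). specialize (Hk r Hr).
    specialize (B1 r Hr). specialize (B2 r Hr). specialize (B3 r Hr).
    specialize (B4 r Hr). specialize (B5 r Hr). specialize (B6 r Hr).
    set (c := -2*(P-1) - 2*P*beta*AU1 r + 2*beta*Lam).
    set (k := 2*P*(2*P*AL1 r - beta*AU2 r)).
    assert (Hid : F2U p beta Lam (AU1 r) (AU2 r) - F2U p beta Lam (X1 r) (X2 r)
       = c * (AU2 r - X2 r) + k * (AU1 r - X1 r) + 2*P*P*(AU1 r - X1 r)^2
         + 4*P*P*((AU1 r - X1 r)*(X1 r - AL1 r))
         + 2*P*beta*((AU1 r - X1 r)*(AU2 r - X2 r))).
    { unfold F2U, c, k. fold P. ring. }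
    assert (Hck : c + k + 4*P*P*N + 2*P*beta*N <= K).
    { unfold c, k, K, N.
      assert (0 <= P*beta*(M + AU1 r)) by (apply Rmult_le_pos; unfold M in *; lra).
      assert (0 <= P*P*(M - AL1 r)) by (apply Rmult_le_pos; unfold M in *; lra).
      assert (0 <= P*beta*(M + AU2 r)) by (apply Rmult_le_pos; unfold M in *; lra).
      nra. }
    assert (0 <= k) by (unfold k; apply Rmult_le_pos; lra).
    assert (k * (AU2 r - X2 r) <= k * (AU1 r - X1 r)) by (apply Rmult_le_compat_l; lra).
    assert (Hpr : N * (AU2 r - X2 r) <= (AU1 r - X1 r)*(AU2 r - X2 r))
      by (apply prod_lb; unfold N, M in *; lra).
    assert (Hpr2 : N * (AU2 r - X2 r) <= (AU1 r - X1 r)*(X1 r - AL1 r))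
      by (apply prod_lb; unfold N, M in *; lra).
    assert (2*P*beta*(N * (AU2 r - X2 r)) <= 2*P*beta*((AU1 r - X1 r)*(AU2 r - X2 r)))
      by (apply Rmult_le_compat_l; lra).
    assert (4*P*P*(N * (AU2 r - X2 r)) <= 4*P*P*((AU1 r - X1 r)*(X1 r - AL1 r)))
      by (apply Rmult_le_compat_l; lra).
    assert (0 <= (K - (c + k + 4*P*P*N + 2*P*beta*N)) * (X2 r - AU2 r)) by (apply Rmult_le_pos; lra).
    assert (0 <= 2*P*P*(AU1 r - X1 r)^2) by (apply Rmult_le_pos; [nra | apply pow2_ge_0]).
    lra.
  - exact Hs.
Qed.

Theorem mainTheorem18
  (p : nat) (beta Lam T TL TU : R)
  (X1 X2 dX1 dX2 AL1 AL2 AU1 AU2 : R -> R)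
  (Hp : (3 <= p)%nat) (Hbeta : 0 < beta) (HLam : 0 < Lam) (HT : 0 <= T)
  (HdX1 : forall t, 0 <= t <= T -> derivable_pt_lim X1 t (dX1 t))
  (HdX2 : forall t, 0 <= t <= T -> derivable_pt_lim X2 t (dX2 t))
  (HcX1 : forall t, 0 <= t <= T -> continuity_pt dX1 t)
  (HcX2 : forall t, 0 <= t <= T -> continuity_pt dX2 t)
  (HI1 : forall t, 0 <= t <= T -> dX1 t = F1 p beta (X1 t) (X2 t))
  (HIL : forall t, 0 <= t <= T -> F2L p beta Lam (X1 t) (X2 t) <= dX2 t)
  (HIU : forall t, 0 <= t <= T -> dX2 t <= F2U p beta Lam (X1 t) (X2 t))
  (H0 : Vminus_int p beta (X1 0) (X2 0))
  (HAL1 : forall t, 0 <= t <= TL -> derivable_pt_lim AL1 t (F1 p beta (AL1 t) (AL2 t)))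
  (HAL2 : forall t, 0 <= t <= TL -> derivable_pt_lim AL2 t (F2L p beta Lam (AL1 t) (AL2 t)))
  (HAL0 : AL1 0 = X1 0 /\ AL2 0 = X2 0)
  (HAU1 : forall t, 0 <= t <= TU -> derivable_pt_lim AU1 t (F1 p beta (AU1 t) (AU2 t)))
  (HAU2 : forall t, 0 <= t <= TU -> derivable_pt_lim AU2 t (F2U p beta Lam (AU1 t) (AU2 t)))
  (HAU0 : AU1 0 = X1 0 /\ AU2 0 = X2 0) :
  (forall t, 0 <= t <= T -> t <= TL ->
     le_hit AL1 AL2 TL (Vminus_c p beta) t ->
     le_hit X1 X2 T (Vminus_c p beta) t ->
     AL1 t <= X1 t /\ AL2 t <= X2 t)
  /\
  (forall t, 0 <= t <= T -> t <= TU ->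
     le_hit AU1 AU2 TU (Vminus_c p beta) t ->
     le_hit X1 X2 T (Vminus_c p beta) t ->
     X1 t <= AU1 t /\ X2 t <= AU2 t)
  /\
  (forall t, 0 <= t <= T -> t <= TL -> t <= TU ->
     le_hit AL1 AU2 (Rmin TL TU) (Vminus_c p beta) t ->
     (AL1 t <= X1 t /\ AL2 t <= X2 t) /\ (X1 t <= AU1 t /\ X2 t <= AU2 t))
  /\
  (T <= TL -> T <= TU ->
     (forall s, 0 <= s <= Rmin TL TU -> ~ Vminus_c p beta (AL1 s) (AU2 s)) ->
     forall t, 0 <= t <= T ->
       (AL1 t <= X1 t /\ AL2 t <= X2 t) /\ (X1 t <= AU1 t /\ X2 t <= AU2 t)).
Proof.
  destruct HAL0 as [EL1 EL2]. destruct HAU0 as [EU1 EU2].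
  assert (Hin : 0 <= 2*INR p*X1 0 - beta*X2 0).
  { destruct H0 as [_ [_ H]].
    apply Rmult_lt_compat_l with (r := beta) in H; [|lra].
    replace (beta * (2 * INR p * X1 0 / beta)) with (2 * INR p * X1 0) in H by (field; lra).
    lra. }
  assert (P3 : forall t, 0 <= t <= T -> t <= TL -> t <= TU ->
     le_hit AL1 AU2 (Rmin TL TU) (Vminus_c p beta) t ->
     (AL1 t <= X1 t /\ AL2 t <= X2 t) /\ (X1 t <= AU1 t /\ X2 t <= AU2 t)).
  { intros t Ht HtL HtU Hh.
    assert (Hmin : t <= Rmin TL TU) by (apply Rmin_glb; lra).
    apply (coupled p beta Lam t X1 X2 dX1 dX2 AL1 AL2 AU1 AU2 Hp Hbeta HLam (proj1 Ht));
      try (intros s Hs; solve [ apply HdX1; lra | apply HdX2; lra | apply HAL1; lra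
                              | apply HAL2; lra | apply HAU1; lra | apply HAU2; lra
                              | apply HI1; lra | apply HIL; lra | apply HIU; lra ]);
      try assumption; try lra.
    apply (region p beta AL1 AU2 (Rmin TL TU) t Hbeta ltac:(lra)); auto.
    - intros _. split; [apply (dcont _ _ _ (HAL1 t ltac:(lra))) | apply (dcont _ _ _ (HAU2 t ltac:(lra)))].
    - rewrite EL1, EU2; exact Hin. }
  split; [|split; [|split]].
  - intros t Ht HtL Hh1 _.
    apply (lower p beta Lam t X1 X2 dX1 dX2 AL1 AL2 Hp Hbeta HLam (proj1 Ht));
      try (intros s Hs; solve [ apply HdX1; lra | apply HdX2; lra | apply HAL1; lra
                              | apply HAL2; lra | apply HI1; lra | apply HIL; lra ]);
      try assumption; try lra.
    apply (region p beta AL1 AL2 TL t Hbeta ltac:(lra)); auto.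
    + intros _. split; [apply (dcont _ _ _ (HAL1 t ltac:(lra))) | apply (dcont _ _ _ (HAL2 t ltac:(lra)))].
    + rewrite EL1, EL2; exact Hin.
  - intros t Ht HtU _ Hh2.
    apply (upper p beta Lam t X1 X2 dX1 dX2 AU1 AU2 Hp Hbeta HLam (proj1 Ht));
      try (intros s Hs; solve [ apply HdX1; lra | apply HdX2; lra | apply HAU1; lra
                              | apply HAU2; lra | apply HI1; lra | apply HIU; lra ]);
      try assumption; try lra.
    apply (region p beta X1 X2 T t Hbeta ltac:(lra)); auto.
    intros _. split; [apply (dcont _ _ _ (HdX1 t ltac:(lra))) | apply (dcont _ _ _ (HdX2 t ltac:(lra)))].
  - exact P3.
  - intros HTL HTU Hn t Ht. apply P3; try lra.
    intros s Hs HV. exfalso. exact (Hn s Hs HV).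
Qed.
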